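(* Let $\star$ be a star operation on a domain $R$. If every nonzero finitely generated ideal of $R$ is $\star$-basic, then every nonzero finitely generated ideal of $R$ is $\star_f$-basic. In particular, if every nonzero finitely generated ideal of $R$ is $v$-basic, then every nonzero finitely generated ideal of $R$ is $t$-basic.
   Context: A star operation on a domain $R$ with quotient field $K$ is a map $I\mapsto I^\star$ on nonzero fractional ideals with $(aI)^\star=aI^\star$ ($0\ne a\in K$), $R^\star=R$, $I\subseteq I^\star$, $I\subseteq J\Rightarrow I^\star\subseteq J^\star$, $I^{\star\star}=I^\star$. The associated star operation $\star_f$ is $I^{\star_f}=\bigcup J^\star$ over finitely generated subideals $J\subseteq I$. $I_v=(R:(R:I))$ with $(R:I)=\{x\in K:xI\subseteq R\}$, and $t=v_f$. For a nonzero ideal $I$, an ideal $J\subseteq I$ is a $\star$-reduction of $I$ if $(JI^n)^\star=(I^{n+1})^\star$ for some integer $n\ge0$; $I$ is $\star$-basic if every $\star$-reduction $J$ of $I$ satisfies $J^\star=I^\star$. *)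

(* Defs.v *)
(* Subsets of K are predicates K -> Prop; equality of
   subsets is Leibniz equality of predicates (use functional/propositional
   extensionality to prove such equalities). *)
From HB Require Import structures.
From mathcomp Require Import all_boot all_order all_algebra.
Set Implicit Arguments. Unset Strict Implicit. Unset Printing Implicit Defensive.
Import Order.TTheory GRing.Theory Num.Theory.
Local Open Scope ring_scope.

Section StarOps.
Variable R : idomainType.
Local Notation K := {fraction R}.
Local Notation tofrac := (@FracField.tofrac R).

Definition fset := K -> Prop.

Definition inR : fset := fun x => exists r : R, x = tofrac r.

Definition fsubset (I J : fset) : Prop := forall x, I x -> J x.

Definition nonzero_set (I : fset) : Prop := exists x, I x /\ x <> 0.

Definition submodule (I : fset) : Prop :=
  [/\ I 0, (forall x y, I x -> I y -> I (x + y))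
    & (forall r x, inR r -> I x -> I (r * x))].

Definition frac_ideal (I : fset) : Prop :=
  [/\ submodule I, nonzero_set I
    & exists d : R, d != 0 /\ forall x, I x -> inR (tofrac d * x)].

Definition ideal (I : fset) : Prop := submodule I /\ fsubset I inR.

Definition smul (a : K) (I : fset) : fset := fun x => exists y, I y /\ x = a * y.

Definition span (s : seq K) : fset :=
  fun x => exists c : nat -> R, x = \sum_(i < size s) tofrac (c i) * s`_i.

Definition mulI (I J : fset) : fset :=
  fun x => exists (n : nat) (a b : nat -> K),
    (forall i, (i < n)%N -> I (a i) /\ J (b i)) /\ x = \sum_(i < n) a i * b i.

Fixpoint powI (I : fset) (n : nat) : fset :=
  match n with 0 => inR | n'.+1 => mulI (powI I n') I end.

Definition is_star_op (star : fset -> fset) : Prop :=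
  (forall I, frac_ideal I -> frac_ideal (star I)) /\
  [/\ (forall (a : K) I, a != 0 -> frac_ideal I -> star (smul a I) = smul a (star I)),
      star inR = inR,
      (forall I, frac_ideal I -> fsubset I (star I)),
      (forall I J, frac_ideal I -> frac_ideal J -> fsubset I J ->
                   fsubset (star I) (star J))
    & (forall I, frac_ideal I -> star (star I) = star I)].

Definition star_f (star : fset -> fset) : fset -> fset :=
  fun I x => exists s : seq K,
    fsubset (span s) I /\ nonzero_set (span s) /\ star (span s) x.

Definition colon (I : fset) : fset := fun x => forall y, I y -> inR (x * y).

Definition v_op (I : fset) : fset := colon (colon I).
Definition t_op : fset -> fset := star_f v_op.

Definition fg_ideal (I : fset) : Prop :=
  (exists s : seq K, (forall i, (i < size s)%N -> inR s`_i) /\ I = span s)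
  /\ nonzero_set I.

Definition star_reduction (star : fset -> fset) (I J : fset) : Prop :=
  [/\ ideal J, nonzero_set J, fsubset J I
    & exists n : nat, star (mulI J (powI I n)) = star (powI I n.+1)].

Definition star_basic (star : fset -> fset) (I : fset) : Prop :=
  forall J, star_reduction star I J -> star J = star I.

End StarOps.

(* Main.v *)
Require Import Defs.
From HB Require Import structures.
From mathcomp Require Import all_boot all_order all_algebra.
From mathcomp Require Import zify.
From Stdlib Require Import FunctionalExtensionality PropExtensionality.
Set Implicit Arguments. Unset Strict Implicit. Unset Printing Implicit Defensive.
Import Order.TTheory GRing.Theory Num.Theory.
Local Open Scope ring_scope.

Section Aux.
Variable R : idomainType.
Local Notation K := {fraction R}.
Local Notation tofrac := (@FracField.tofrac R).
Local Notation fset := (fset R).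
Local Notation span := (@Defs.span R).

Lemma inR_sub : submodule (@inR R).
Proof.
split.
- by exists 0; rewrite rmorph0.
- by move=> x y [a ->] [b ->]; exists (a + b); rewrite rmorphD.
- by move=> r x [a ->] [b ->]; exists (a * b); rewrite rmorphM.
Qed.

Lemma sub_sum (S : fset) n (F : 'I_n -> K) : submodule S ->
  (forall i, S (F i)) -> S (\sum_(i < n) F i).
Proof.
case=> S0 SD _ HF; apply: (big_ind S) => //; exact: SD.
Qed.

Lemma span_submod (s : seq K) : submodule (span s).
Proof.
split.
- exists (fun _ => 0); rewrite big1 // => i _; by rewrite rmorph0 mul0r.
- move=> x y [c ->] [d ->]; exists (fun i => c i + d i).
  by rewrite -big_split /=; apply: eq_bigr => i _; rewrite rmorphD mulrDl.
- move=> r x [a ->] [c ->]; exists (fun i => a * c i).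
  by rewrite mulr_sumr; apply: eq_bigr => i _; rewrite rmorphM mulrA.
Qed.

Lemma mem_span (s : seq K) x : x \in s -> span s x.
Proof.
move=> xs; have Hi : (index x s < size s)%N by rewrite index_mem.
exists (fun k => (k == index x s)%:R).
rewrite (bigD1 (Ordinal Hi)) //= eqxx rmorph1 mul1r nth_index // big1 ?addr0 //.
move=> k /eqP Hk; suff -> : (nat_of_ord k == index x s) = false by rewrite rmorph0 mul0r.
apply/negbTE/eqP => E; apply: Hk; exact: val_inj.
Qed.

Lemma span_sub (s : seq K) (S : fset) : submodule S ->
  (forall x, x \in s -> S x) -> fsubset (span s) S.
Proof.
move=> HS Hs x [c ->]; apply: sub_sum => // i.
case: HS => _ _ HM; apply: HM; first by exists (c i).
by apply: Hs; apply: mem_nth.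
Qed.

Lemma mulI_mem (X Y : fset) x y : X x -> Y y -> mulI X Y (x * y).
Proof.
move=> Hx Hy; exists 1%N, (fun _ => x), (fun _ => y); split.
- by move=> i _.
- by rewrite big_ord1.
Qed.

Lemma mulI_submod (X Y : fset) : submodule X -> submodule (mulI X Y).
Proof.
case=> X0 XD XM; split.
- by exists 0%N, (fun _ => 0), (fun _ => 0); split => //; rewrite big_ord0.
- move=> x y [n [a [b [H1 ->]]]] [m [a' [b' [H2 ->]]]].
  exists (n + m)%N, (fun i => if (i < n)%N then a i else a' (i - n)%N),
    (fun i => if (i < n)%N then b i else b' (i - n)%N); split.
  + move=> i Hi; case: ifP => Hin; first exact: H1.
    apply: H2; rewrite ltnNge in Hin; move/negbFE: Hin => Hin; lia.
  + rewrite big_split_ord /=; congr (_ + _); apply: eq_bigr => i _ /=.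
    * by rewrite ltn_ord.
    * by rewrite ltnNge leq_addr /= addKn.
- move=> r x Hr [n [a [b [H1 ->]]]]; exists n, (fun i => r * a i), b; split.
  + by move=> i Hi; have [? ?] := H1 i Hi; split => //; apply: XM.
  + by rewrite mulr_sumr; apply: eq_bigr => i _; rewrite mulrA.
Qed.

Lemma mulI_mono (X Y X' Y' : fset) : fsubset X X' -> fsubset Y Y' ->
  fsubset (mulI X Y) (mulI X' Y').
Proof.
move=> HX HY x [n [a [b [H ->]]]]; exists n, a, b; split => // i Hi.
by have [? ?] := H i Hi; split; [apply: HX | apply: HY].
Qed.

Lemma mulI_comm (X Y : fset) : fsubset (mulI X Y) (mulI Y X).
Proof.
move=> x [n [a [b [H ->]]]]; exists n, b, a; split.
- by move=> i Hi; have [? ?] := H i Hi.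
- by apply: eq_bigr => i _; rewrite mulrC.
Qed.

Lemma mulI_sub (X Y S : fset) : submodule S -> fsubset Y S -> fsubset X (@inR R) ->
  fsubset (mulI X Y) S.
Proof.
move=> HS HY HX x [n [a [b [H ->]]]]; apply: sub_sum => // i.
have [Ha Hb] := H i (ltn_ord i); case: HS => _ _ HM; apply: HM; [exact: HX | exact: HY].
Qed.


Definition good (X : fset) := [/\ submodule X, nonzero_set X & fsubset X (@inR R)].

Lemma good_mulI X Y : good X -> good Y -> good (mulI X Y).
Proof.
case=> HXs [x [Hx x0]] HXr [HYs [y [Hy y0]] HYr]; split.
- exact: mulI_submod.
- by exists (x * y); split; [apply: mulI_mem | apply/eqP; rewrite mulf_neq0 //; apply/eqP].
- exact: mulI_sub inR_sub HYr HXr.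
Qed.

Lemma good_pow I n : good I -> good (powI I n).
Proof.
move=> HI; elim: n => [|n IH] /=; last exact: good_mulI.
split => //; first exact: inR_sub.
by exists 1; split; [exists 1; rewrite rmorph1 | apply/eqP; exact: oner_neq0].
Qed.

Lemma span_mono (s t : seq K) : (forall x, x \in s -> x \in t) -> fsubset (span s) (span t).
Proof. by move=> H; apply: span_sub; [exact: span_submod | move=> x /H; exact: mem_span]. Qed.

Lemma span_prod g s a b : span g a -> span s b ->
  span [seq x * y | x <- g, y <- s] (a * b).
Proof.
have [S0 SD SM] := span_submod [seq x * y | x <- g, y <- s].
move=> [c ->] [d ->]; rewrite mulr_suml; apply: sub_sum => [|i]; first exact: span_submod.
rewrite -mulrA; apply: (SM); first by exists (c i).
rewrite mulr_sumr; apply: sub_sum => [|l]; first exact: span_submod.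
rewrite mulrCA; apply: (SM); first by exists (d l).
by apply: mem_span; apply: allpairs_f; apply: mem_nth.
Qed.

Lemma pow_fg s n : exists g, (forall x, x \in g -> powI (span s) n x) /\
  fsubset (powI (span s) n) (span g).
Proof.
elim: n => [|n [g [Hg1 Hg2]]] /=.
- exists [:: 1]; split.
  + by move=> x; rewrite inE => /eqP ->; exists 1; rewrite rmorph1.
  + move=> x Hx; rewrite -[x]mulr1; have [_ _ SM] := span_submod [:: 1].
    by apply: (SM) => //; apply: mem_span; rewrite inE.
- exists [seq x * y | x <- g, y <- s]; split.
  + move=> z /allpairsP [[x y] [/= Hx Hy ->]].
    by apply: mulI_mem; [exact: Hg1 | exact: mem_span].
  + move=> z [m [a [b [H ->]]]]; apply: sub_sum => [|i]; first exact: span_submod.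
    have [Ha Hb] := H i (ltn_ord i); apply: span_prod => //; exact: Hg2.
Qed.

Lemma extract (J C : fset) (s' : seq K) : (forall y, y \in s' -> mulI J C y) ->
  exists j : seq K, (forall x, x \in j -> J x) /\ (forall y, y \in s' -> mulI (span j) C y).
Proof.
elim: s' => [|y s' IH] H; first by exists (Nil K); split => x; rewrite in_nil.
have [j [Hj1 Hj2]] := IH (fun z Hz => H z (mem_behead (s := y :: s') Hz)).
have [n [a [b [Hab Ey]]]] := H y (mem_head _ _).
exists ([seq a i | i <- iota 0 n] ++ j); split.
- move=> x; rewrite mem_cat => /orP [/mapP [i Hi ->]|/Hj1 //].
  by rewrite mem_iota add0n in Hi; case: (Hab i Hi).
- move=> z; rewrite inE => /orP [/eqP ->|Hz].
  + rewrite Ey; exists n, a, b; split => // i Hi; split; last by case: (Hab i Hi).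
    by apply: mem_span; rewrite mem_cat map_f // mem_iota add0n.
  + apply: mulI_mono (Hj2 z Hz) => // w; apply: span_mono => x Hx.
    by rewrite mem_cat Hx orbT.
Qed.


Lemma good_sub (s : seq K) X : good X -> fsubset (span s) X -> nonzero_set (span s) ->
  good (span s).
Proof.
case=> _ _ Xr Hs Hnz; split => //; first exact: span_submod.
by move=> x /Hs /Xr.
Qed.

Section Main.
Variables (star : fset -> fset) (P : fset -> Prop).
Hypothesis HP : forall X, good X -> P X.
Hypothesis H1 : forall X, P X -> fsubset X (star X).
Hypothesis H2 : forall X Y, P X -> P Y -> fsubset X Y -> fsubset (star X) (star Y).
Hypothesis H3 : forall X Y, P X -> P Y -> fsubset X (star Y) -> fsubset (star X) (star Y).
Hypothesis H5 : forall X, P X -> submodule (star X).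

Lemma starf_ext B : good B -> fsubset B (star_f star B).
Proof.
move=> HB; have [Bs [y [Hy y0]] Br] := HB; move=> x Hx.
have Hsub : fsubset (span [:: x; y]) B.
  apply: span_sub => // z; rewrite !inE => /orP [/eqP ->|/eqP ->] //.
have Hnz : nonzero_set (span [:: x; y]).
  by exists y; split => //; apply: mem_span; rewrite !inE eqxx orbT.
exists [:: x; y]; split => //; split => //.
apply: H1; first by apply: HP; exact: good_sub Hsub Hnz.
by apply: mem_span; rewrite inE eqxx.
Qed.

Lemma main_abs : (forall I, fg_ideal I -> star_basic star I) ->
  forall I, fg_ideal I -> star_basic (star_f star) I.
Proof.
move=> Hb I HI J [[Js Jr] [j0 [Hj0 j00]] JI [n Hn]].
have HI' := HI; case: HI => [[s [Hs EI]] Hnz]; subst I.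
have Ig : good (span s).
  split => //; first exact: span_submod.
  apply: span_sub; first exact: inR_sub.
  by move=> x Hx; rewrite -(nth_index 0 Hx); apply: Hs; rewrite index_mem.
set C := powI (span s) n.
have Cg : good C by exact: good_pow.
have [Cs Cnz Cr] := Cg.
have [g [Hg1 Hg2]] := pow_fg s n.+1.
have GJ0 : forall j : seq K, (forall x, x \in j -> J x) -> good (span (j0 :: j)).
  move=> j Hj; split; first exact: span_submod.
  - by exists j0; split => //; apply: mem_span; rewrite inE eqxx.
  - apply: span_sub; first exact: inR_sub.
    by move=> x; rewrite inE => /orP [/eqP ->|/Hj]; apply: Jr.
have GM : forall j : seq K, (forall x, x \in j -> J x) -> good (mulI (span (j0 :: j)) C).
  by move=> j Hj; apply: good_mulI => //; apply: GJ0.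
have [j [Hj Hjg]] : exists j : seq K, (forall x, x \in j -> J x) /\
    forall x, x \in g -> star (mulI (span (j0 :: j)) C) x.
  clear Hg2; elim: g Hg1 => [|x g IH] Hg1.
    by exists (Nil K); split => z; rewrite in_nil.
  have [j1 [Hj1 Hj1']] := IH (fun z Hz => Hg1 z (mem_behead (s := x :: g) Hz)).
  have := starf_ext (good_pow n.+1 Ig) (Hg1 x (mem_head _ _)).
  rewrite -Hn => -[s' [Hs' [Hs'nz Hxs']]].
  have [j2 [Hj2 Hj2']] := extract (s' := s') (fun y Hy => Hs' y (mem_span Hy)).
  have Hj12 : forall z, z \in j1 ++ j2 -> J z.
    by move=> z; rewrite mem_cat => /orP [/Hj1|/Hj2].
  exists (j1 ++ j2); split => // z; rewrite inE => /orP [/eqP ->|Hz].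
  + apply: H2 Hxs'.
    * apply: HP; apply: good_sub Hs' Hs'nz.
      by apply: good_mulI => //; split => //; exists j0.
    * exact: HP (GM _ Hj12).
    * apply: span_sub; first exact: mulI_submod (span_submod _).
      move=> y Hy; apply: mulI_mono (Hj2' y Hy) => // w; apply: span_mono => u.
      by rewrite !inE mem_cat => ->; rewrite !orbT.
  + apply: H2 (Hj1' z Hz); [exact: HP (GM _ Hj1) | exact: HP (GM _ Hj12) |].
    apply: mulI_mono => // w; apply: span_mono => u.
    by rewrite !inE mem_cat => /orP [->|->]; rewrite ?orbT.
have J0s : fsubset (span (j0 :: j)) (span s).
  apply: span_sub; first exact: span_submod.
  by move=> x; rewrite inE => /orP [/eqP ->|/Hj]; apply: JI.
have EJ0 : star (span (j0 :: j)) = star (span s).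
  apply: Hb => //; split.
  - by case: (GJ0 j Hj).
  - by case: (GJ0 j Hj).
  - exact: J0s.
  - exists n; apply: functional_extensionality => x; apply: propositional_extensionality.
    split.
    + apply: H2; [exact: HP (GM _ Hj) | exact: HP (good_pow n.+1 Ig) |].
      move=> y /mulI_comm; apply: mulI_mono => //.
    + apply: H3; [exact: HP (good_pow n.+1 Ig) | exact: HP (GM _ Hj) |].
      move=> y /Hg2; apply: span_sub => //; exact: H5 (HP (GM _ Hj)).
apply: functional_extensionality => x; apply: propositional_extensionality.
split => -[s1 [Hs1 [nz Hx]]].
- by exists s1; split => // y /Hs1 /JI.
- exists (j0 :: j); split.
    apply: span_sub; first exact: Js.
    by move=> y; rewrite inE => /orP [/eqP ->|/Hj].
  split; first by case: (GJ0 j Hj).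
  rewrite EJ0; apply: H2 Hx; last exact: Hs1.
  + by apply: HP; apply: good_sub Hs1 nz.
  + exact: HP.
Qed.

End Main.
End Aux.

Theorem proposition1p8 (R : idomainType) :
  (forall star : fset R -> fset R, is_star_op star ->
     (forall I, fg_ideal I -> star_basic star I) ->
     forall I, fg_ideal I -> star_basic (star_f star) I)
  /\
  ((forall I, fg_ideal I -> star_basic (@v_op R) I) ->
     forall I, fg_ideal I -> star_basic (@t_op R) I).
Proof.
have [R0 RD RM] := @inR_sub R.
split.
- move=> star [Hfrac [Hsm Hone Hext Hmono Hidem]] Hb.
  apply: (main_abs (P := @frac_ideal R)) => //.
  + move=> X [Xs Xnz Xr]; split => //; exists 1; split; first exact: oner_neq0.
    by move=> x /Xr; rewrite rmorph1 mul1r.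
  + move=> X Y HX HY HXY; rewrite -(Hidem Y HY); apply: Hmono => //; exact: Hfrac.
  + by move=> X /Hfrac [].
- move=> Hb; apply: (main_abs (star := @v_op R) (P := fun _ => True)) => //.
  + move=> X _ x Hx y Hy; rewrite mulrC; exact: Hy x Hx.
  + move=> X Y _ _ HXY x Hx y Hy; apply: Hx => z Hz; exact: Hy z (HXY z Hz).
  + move=> X Y _ _ HXY x Hx y Hy; apply: Hx => z Hz; rewrite mulrC; exact: HXY z Hz y Hy.
  + move=> X _; split.
    * by move=> y _; rewrite mul0r.
    * by move=> x y Hx Hy z Hz; rewrite mulrDl; apply: RD; [apply: Hx | apply: Hy].
    * by move=> r x Hr Hx z Hz; rewrite -mulrA; apply: RM => //; apply: Hx.
Qed.
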